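(* Let $n$ and $\omega$ be positive integers with $\omega\ge\lfloor 3n/4\rfloor$. If $\mathbf{s}_n\in\mathcal{B}(n,\lceil n/2\rceil)$ with $add(\mathbf{s}_n)=\omega-\lceil n/2\rceil$, then $\mathbf{s}_n$ is a sequence representative of its shift equivalence class $E(\mathbf{s}_n)$, i.e. $add(\mathbf{s}_n)\ge add(\mathbf{a})$ for all $\mathbf a\in E(\mathbf{s}_n)$.
   Context: All sequences are binary (entries in $\mathbb{Z}_2$), $\overline{x}=x\oplus1$, $x\bmod d$ is the least nonnegative residue, and $\mathbf{a}^q$ is the concatenation of $q$ copies of $\mathbf a$. For $\mathbf{s}_n=(s_0,\dots,s_{n-1})$, $\mathbf{s}_j=(s_0,\dots,s_{j-1})$. A length-$m$ sequence is periodic if it is the concatenation of $m/e$ copies of a length-$e$ sequence for a proper divisor $e$ of $m$, aperiodic otherwise. Right circular shift: $R^k(\mathbf{s}_n)=(s_{n-k},\dots,s_{n-1},s_0,\dots,s_{n-k-1})$, $0\le k<n$. For $c\ge\lfloor n/2\rfloor$ and $1\le d\le\min\{n-c,\lfloor n/2\rfloor\}$, $\mathcal{B}(n,c,d)$ is the set of aperiodic length-$n$ sequences $\mathbf{s}_n$ with $\mathbf{s}_d$ aperiodic and $\mathbf{s}_{c+d}=(s_0,\dots,s_{d-1})^q(s_0,\dots,s_{r-1},\overline{s_r})$, where $q=\lfloor(c+d-1)/d\rfloor$, $r=c+d-1-qd$, and $s_{c+d},\dots,s_{n-1}$ are arbitrary. $\mathcal{B}(n,c)=\bigcup_{d=1}^{\min\{n-c,\lfloor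 n/2\rfloor\}}\mathcal{B}(n,c,d)$. For $\mathbf{s}_n\in\mathcal{B}(n,c,d)$, $add(\mathbf{s}_n)$ is the integer $t\ge0$ such that $s_{n-1-i}=s_{(d-1-i)\bmod d}$ for $0\le i<t$ and $s_{n-1-t}\neq s_{(d-1-t)\bmod d}$. Here $E(\mathbf{s}_n)=\{R^k(\mathbf{s}_n):0\le k<n\}\cap\mathcal{B}(n,\lceil n/2\rceil)$. *)

(* Defs.v *)
(* Binary sequences are represented as [seq bool]
   (false = 0, true = 1, negb = complement x (+) 1). *)
From mathcomp Require Import all_boot.
Set Implicit Arguments. Unset Strict Implicit. Unset Printing Implicit Defensive.

Definition periodic (s : seq bool) : Prop :=
  exists e : nat, [/\ 0 < e, e < size s, e %| size s &
    s = flatten (nseq (size s %/ e) (take e s))].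

Definition aperiodic (s : seq bool) : Prop := ~ periodic s.

Definition inB (n c d : nat) (s : seq bool) : Prop :=
  let q := (c + d - 1) %/ d in
  let r := (c + d - 1) %% d in
  [/\ size s = n, n./2 <= c, 1 <= d & d <= minn (n - c) n./2] /\
  [/\ aperiodic s, aperiodic (take d s) &
      take (c + d) s =
        flatten (nseq q (take d s)) ++ take r s ++ [:: ~~ nth false s r]].

Definition inBc (n c : nat) (s : seq bool) : Prop := exists d, inB n c d s.

(* add(s) for s in B(n,c,d): the least t with
   s_{n-1-t} <> s_{(d-1-t) mod d}; note (d-1-t) mod d = d-1-(t mod d).
   (Such t < n always exists for s in B(n,c,d); [find] returns n otherwise.) *)
Definition add (d : nat) (s : seq bool) : nat :=
  find (fun i => nth false s ((size s).-1 - i) != nth false s (d.-1 - i %% d))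
       (iota 0 (size s)).

Definition Rshift (k : nat) (s : seq bool) : seq bool := rotr k s.

(* Main.v *)
Require Import Defs.
From mathcomp Require Import all_boot.
From mathcomp Require Import zify.
From Stdlib Require Import ZArith Lia.
Open Scope Z_scope.

Definition periodicZ (P : Z -> bool) (p : Z) := forall j, P (j + p) = P j.

Lemma periodicZ_mul (P : Z -> bool) p : periodicZ P p ->
  forall m j, P (j + m * p) = P j.
Proof.
  intros H m.
  assert (Hpos : forall k, 0 <= k -> forall j, P (j + k * p) = P j).
  { intros k Hk. pattern k. apply natlike_ind; [ | | exact Hk].
    - intros j. now erewrite Z.mul_0_l, Z.add_0_r.
    - intros x Hx IH j. replace (j + Z.succ x * p) with ((j + x * p) + p) by lia.
      erewrite H. apply IH. }
  intros j. destruct (Z_le_gt_dec 0 m) as [Hm|Hm].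
  - now apply Hpos.
  - erewrite <- (Hpos (- m) ltac:(lia) (j + m * p)).
    f_equal. lia.
Qed.

Lemma chainZ (P : Z -> bool) G lo hi :
  (forall j, lo <= j -> j + G < hi -> P j = P (j + G)) ->
  forall m j, 0 <= m -> lo <= j -> 0 <= G -> j + m * G < hi -> P j = P (j + m * G).
Proof.
  intros H m j Hm. revert j. pattern m. apply natlike_ind; [ | | exact Hm].
  - intros j _ _ _. now erewrite Z.mul_0_l, Z.add_0_r.
  - intros x Hx IH j Hj HG Hlt.
    erewrite (IH j Hj HG ltac:(nia)).
    replace (j + Z.succ x * G) with ((j + x * G) + G) by lia.
    apply H; nia.
Qed.

Lemma gcd_pos p q : 0 < p -> 0 < Z.gcd p q.
Proof.
  intros Hp. pose proof (Z.gcd_nonneg p q).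
  destruct (Z.eq_dec (Z.gcd p q) 0) as [E|E]; [|lia].
  apply Z.gcd_eq_0 in E. lia.
Qed.

Lemma divide_le a b : 0 < a -> 0 < b -> (a | b) -> a <= b.
Proof. intros Ha Hb [k Hk]. assert (0 < k) by nia. nia. Qed.

Lemma FW_aux (N : nat) : forall (P : Z -> bool) p q len,
  (Z.to_nat (p + q) <= N)%nat -> 0 < p -> 0 < q -> p <= q -> p + q - Z.gcd p q <= len ->
  (forall i, 0 <= i -> i + p < len -> P i = P (i + p)) ->
  (forall i, 0 <= i -> i + q < len -> P i = P (i + q)) ->
  forall i, 0 <= i -> i + Z.gcd p q < len -> P i = P (i + Z.gcd p q).
Proof.
  induction N as [|N IHN]; intros P p q len HN Hp Hq Hpq Hlen Pp Pq.
  - lia.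
  - destruct (Z.eq_dec p q) as [E|Hne].
    + subst q. erewrite Z.gcd_diag_nonneg by lia. exact Pp.
    + set (G := Z.gcd p q).
      assert (HG0 : 0 < G) by (apply gcd_pos; lia).
      assert (HGp : (G | p)) by apply Z.gcd_divide_l.
      assert (HGq : (G | q)) by apply Z.gcd_divide_r.
      assert (HGqp : (G | q - p)) by (apply Z.divide_sub_r; assumption).
      assert (Hqp : G <= q - p) by (apply divide_le; [lia|lia|assumption]).
      assert (HGle : G <= p) by (apply divide_le; [lia|lia|assumption]).
      assert (Pq' : forall i, 0 <= i -> i + (q - p) < len - p -> P i = P (i + (q - p))).
      { intros i Hi Hi2. erewrite (Pq i Hi ltac:(lia)).
        replace (i + q) with ((i + (q - p)) + p) by lia.
        symmetry. apply Pp; lia. }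
      assert (Pp' : forall i, 0 <= i -> i + p < len - p -> P i = P (i + p)).
      { intros i Hi Hi2. apply Pp; lia. }
      assert (Hpre : forall i, 0 <= i -> i + G < len - p -> P i = P (i + G)).
      { assert (E : Z.gcd p (q - p) = G) by (unfold G; apply Z.gcd_sub_diag_r).
        destruct (Z_le_gt_dec p (q - p)) as [C|C].
        - erewrite <- E. apply (IHN P p (q - p) (len - p)); try lia; assumption.
        - erewrite <- E, Z.gcd_comm.
          apply (IHN P (q - p) p (len - p)); try lia; try assumption.
          erewrite Z.gcd_comm, E. lia. }
      destruct HGp as [mp Hmp].
      assert (Hchain : forall i, 0 <= i -> i < p -> i + G < len -> len - p <= i + G ->
                P i = P (i + G)).
      { intros i Hi C2 Hi2 C.
        assert (Hj : 0 <= i + G - p) by lia.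
        transitivity (P (i + G - p)).
        { assert (Hc := chainZ P G 0 (len - p) Hpre (mp - 1) (i + G - p)
                    ltac:(nia) Hj ltac:(lia) ltac:(nia)).
          erewrite Hc. f_equal. nia. }
        erewrite (Pp (i + G - p)) by lia. f_equal; lia. }
      assert (Hmain : forall k : nat, forall i, 0 <= i -> (Z.to_nat i <= k)%nat ->
                i + G < len -> P i = P (i + G)).
      { induction k as [|k IHk]; intros i Hi Hk Hi2;
          (destruct (Z_lt_le_dec (i + G) (len - p)) as [C|C]; [apply Hpre; lia|]);
          (destruct (Z_le_gt_dec p i) as [C2|C2]).
        - lia.
        - apply Hchain; lia.
        - transitivity (P (i - p)).
          { erewrite (Pp (i - p)) by lia. f_equal; lia. }
          erewrite (IHk (i - p)) by lia.
          erewrite (Pp (i - p + G)) by lia. f_equal; lia.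
        - apply Hchain; lia. }
      intros i Hi Hi2. apply (Hmain (Z.to_nat i)); lia.
Qed.


Lemma FW (P : Z -> bool) p q len : 0 < p -> 0 < q -> p + q - Z.gcd p q <= len ->
  (forall i, 0 <= i -> i + p < len -> P i = P (i + p)) ->
  (forall i, 0 <= i -> i + q < len -> P i = P (i + q)) ->
  forall i, 0 <= i -> i + Z.gcd p q < len -> P i = P (i + Z.gcd p q).
Proof.
  intros Hp Hq Hl Pp Pq. destruct (Z_le_gt_dec p q) as [C|C].
  - apply (FW_aux (Z.to_nat (p + q)) P p q len); auto.
  - erewrite Z.gcd_comm. apply (FW_aux (Z.to_nat (q + p)) P q p len); try lia; auto.
    erewrite Z.gcd_comm. lia.
Qed.

Lemma win_global (U : Z -> bool) d G w0 : 0 < G -> 0 < d -> (G | d) -> periodicZ U d ->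
  (forall j, w0 <= j -> j + G < w0 + d -> U j = U (j + G)) -> periodicZ U G.
Proof.
  intros HG Hd [m Hm] Hper Hw j.
  set (r := (j - w0) mod d). set (k := (j - w0) / d).
  assert (Hr : 0 <= r < d) by (apply Z.mod_pos_bound; lia).
  assert (Hj : j = w0 + r + k * d) by (unfold r, k; pose proof (Z.div_mod (j - w0) d); lia).
  assert (E1 : U j = U (w0 + r)) by (erewrite Hj; apply periodicZ_mul; auto).
  assert (E2 : U (j + G) = U (w0 + r + G)).
  { erewrite Hj. replace (w0 + r + k * d + G) with ((w0 + r + G) + k * d) by lia.
    apply periodicZ_mul; auto. }
  erewrite E1, E2. symmetry.
  destruct (Z_lt_le_dec (w0 + r + G) (w0 + d)) as [C|C].
  - apply Hw; lia.
  - (* w0 + r + G - d in window, then chain *)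
    assert (E3 : U (w0 + r + G) = U (w0 + r + G - d)).
    { replace (w0 + r + G) with ((w0 + r + G - d) + 1 * d) at 1 by lia.
      apply periodicZ_mul; auto. }
    erewrite E3.
    assert (Hm1 : 1 <= m) by nia.
    assert (Hc := chainZ U G w0 (w0 + d) Hw (m - 1) (w0 + r + G - d) ltac:(lia) ltac:(lia)
                 ltac:(lia) ltac:(nia)).
    erewrite Hc. f_equal. nia.
Qed.

Definition run (X U : Z -> bool) (d lo hi : Z) :=
  periodicZ U d /\ (forall i, lo <= i < hi -> X i = U i) /\
  X (lo - 1) <> U (lo - 1) /\ X hi <> U hi.

Definition primZ (U : Z -> bool) (d : Z) :=
  forall p, 0 < p < d -> (p | d) -> ~ periodicZ U p.

Lemma run_eq X U n d lo hi k i : periodicZ X n -> run X U d lo hi ->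
  k * n + lo <= i < k * n + hi -> X i = U (i - k * n).
Proof.
  intros HX [HU [HXU _]] Hi.
  erewrite <- (HXU (i - k * n)) by lia.
  erewrite <- (periodicZ_mul X n HX k (i - k * n)). f_equal; lia.
Qed.

Lemma run_match X U n d lo hi k i : periodicZ X n -> run X U d lo hi -> 0 <= d ->
  k * n + lo <= i -> i + d < k * n + hi -> X i = X (i + d).
Proof.
  intros HX Hr Hd H1 H2. pose proof Hr as [HU _].
  erewrite (run_eq X U n d lo hi k i), (run_eq X U n d lo hi k (i + d)) by (auto; lia).
  replace (i + d - k * n) with ((i - k * n) + d) by lia. now erewrite HU.
Qed.

Lemma run_nm1 X U n d lo hi k a : periodicZ X n -> run X U d lo hi -> 1 <= d -> lo + d <= hi ->
  a = k * n + lo - 1 -> X a <> X (a + d).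
Proof.
  intros HX Hr Hd Hh Ha. pose proof Hr as [HU [HXU [Hb1 Hb2]]].
  erewrite (run_eq X U n d lo hi k (a + d)) by (auto; lia).
  replace (a + d - k * n) with ((lo - 1) + d) by lia. erewrite HU.
  replace a with (lo - 1 + k * n) by lia. erewrite (periodicZ_mul X n HX).
  exact Hb1.
Qed.

Lemma run_nm2 X U n d lo hi k a : periodicZ X n -> run X U d lo hi -> 1 <= d -> lo + d <= hi ->
  a = k * n + hi - d -> X a <> X (a + d).
Proof.
  intros HX Hr Hd Hh Ha. pose proof Hr as [HU [HXU [Hb1 Hb2]]].
  erewrite (run_eq X U n d lo hi k a) by (auto; lia).
  replace (a - k * n) with ((hi - d)) by lia.
  erewrite <- HU. replace (hi - d + d) with hi by lia.
  replace (a + d) with (hi + k * n) by lia. erewrite (periodicZ_mul X n HX).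
  intro E; apply Hb2; auto.
Qed.


Lemma rm X U n d lo hi k i j : periodicZ X n -> run X U d lo hi -> 0 <= d ->
  k * n + lo <= i -> i + d < k * n + hi -> j = i + d -> X i = X j.
Proof. intros; subst j; eapply run_match; eauto. Qed.

Lemma rn1 X U n d lo hi k a b : periodicZ X n -> run X U d lo hi -> 1 <= d -> lo + d <= hi ->
  a = k * n + lo - 1 -> b = a + d -> X a <> X b.
Proof. intros; subst b; eapply run_nm1; eauto. Qed.

Lemma rn2 X U n d lo hi k a b : periodicZ X n -> run X U d lo hi -> 1 <= d -> lo + d <= hi ->
  a = k * n + hi - d -> b = a + d -> X a <> X b.
Proof. intros; subst b; eapply run_nm2; eauto. Qed.

Lemma rp X n i j : periodicZ X n -> j = i + n -> X i = X j.
Proof. intros H ->. now erewrite H. Qed.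

Lemma per_rule (X : Z -> bool) p a c : X p = X (p + a) -> X (p + c) = X (p + c + a) ->
  X p = X (p + c) -> X (p + a) <> X (p + a + c) -> False.
Proof.
  intros h1 h2 h3 h4. apply h4. erewrite <- h1, h3, h2. f_equal; lia.
Qed.

Lemma per_rule2 (X : Z -> bool) p a c : X p = X (p + a) -> X (p + c) = X (p + c + a) ->
  X (p + a) = X (p + a + c) -> X p <> X (p + c) -> False.
Proof.
  intros h1 h2 h3 h4. apply h4. erewrite h1, h3, h2. f_equal; lia.
Qed.

Lemma win_run X U n d lo hi k w0 len G : periodicZ X n -> run X U d lo hi -> 0 < G -> 0 < d ->
  (G | d) -> k * n + lo <= w0 -> w0 + d <= k * n + hi -> d <= len ->
  (forall i, 0 <= i -> i + G < len -> X (w0 + i) = X (w0 + i + G)) -> periodicZ U G.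
Proof.
  intros HX Hr HG Hd HGd H1 H2 H3 HP. pose proof Hr as [HU _].
  apply (win_global U d G (w0 - k * n)); auto.
  intros j Hj1 Hj2.
  assert (E1 : U j = X (j + k * n))
    by (erewrite (run_eq X U n d lo hi k (j + k * n)) by (auto; lia); f_equal; lia).
  assert (E2 : U (j + G) = X (j + G + k * n))
    by (erewrite (run_eq X U n d lo hi k (j + G + k * n)) by (auto; lia); f_equal; lia).
  erewrite E1, E2.
  replace (j + k * n) with (w0 + (j + k * n - w0)) by lia.
  replace (j + G + k * n) with (w0 + (j + k * n - w0) + G) by lia.
  apply HP; lia.
Qed.

Lemma fw_rule X U V n d g lo hi lo' hi' kI kJ w0 w1 :
  periodicZ X n -> run X U d lo hi -> run X V g lo' hi' -> primZ U d -> primZ V g ->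
  d <> g -> 1 <= d -> 1 <= g ->
  kI * n + lo <= w0 -> kJ * n + lo' <= w0 -> w1 <= kI * n + hi -> w1 <= kJ * n + hi' ->
  d + g - 1 <= w1 - w0 -> False.
Proof.
  intros HX HI HJ PU PV Hne Hd Hg H1 H2 H3 H4 H5.
  set (G := Z.gcd d g).
  assert (HG0 : 0 < G) by (apply gcd_pos; lia).
  assert (HGd : (G | d)) by apply Z.gcd_divide_l.
  assert (HGg : (G | g)) by apply Z.gcd_divide_r.
  assert (HP : forall i, 0 <= i -> i + G < w1 - w0 -> X (w0 + i) = X (w0 + i + G)).
  { intros i Hi Hi2. replace (w0 + i + G) with (w0 + (i + G)) by lia.
    apply (FW (fun i => X (w0 + i)) d g (w1 - w0)); try lia.
    - intros j Hj Hj2. replace (w0 + (j + d)) with (w0 + j + d) by lia.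
      apply (run_match X U n d lo hi kI); auto; lia.
    - intros j Hj Hj2. replace (w0 + (j + g)) with (w0 + j + g) by lia.
      apply (run_match X V n g lo' hi' kJ); auto; lia. }
  assert (PUG : periodicZ U G).
  { apply (win_run X U n d lo hi kI w0 (w1 - w0) G); auto; lia. }
  assert (HGled : G <= d) by (apply divide_le; auto; lia).
  destruct (Z.eq_dec G d) as [E|E].
  - assert (HGleg : G <= g) by (apply divide_le; auto; lia).
    assert (PVG : periodicZ V G).
    { apply (win_run X V n g lo' hi' kJ w0 (w1 - w0) G); auto; lia. }
    apply (PV G); auto; lia.
  - apply (PU G); auto; lia.
Qed.

Lemma exI X U n d e : periodicZ X n -> run X U d 0 (e + d) -> n = 2 * d -> n <= e + d -> 1 <= d ->
  (forall p, 0 < p < n -> (p | n) -> ~ periodicZ X p) -> False.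
Proof.
  intros HX HI Hn He Hd Ha. apply (Ha d); [lia| exists 2; lia |].
  intros j.
  set (r := j mod n). set (k := j / n).
  assert (Hr : 0 <= r < n) by (apply Z.mod_pos_bound; lia).
  assert (Hj : j = r + k * n) by (unfold r, k; pose proof (Z.div_mod j n); lia).
  erewrite Hj. replace (r + k * n + d) with ((r + d) + k * n) by lia.
  erewrite !(periodicZ_mul X n HX).
  destruct (Z_lt_le_dec r e) as [C|C].
  - symmetry. apply (run_match X U n d 0 (e + d) 0); auto; lia.
  - transitivity (X (r - d)).
    + symmetry; apply (rp X n); [auto|lia].
    + apply (rm X U n d 0 (e + d) 0); auto; lia.
Qed.


Lemma core0 n e f d g b X U V :
  periodicZ X n -> run X U d 0 (e + d) -> run X V g b (b + f + g) ->
  primZ U d -> primZ V g ->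
  (forall p, 0 < p < n -> (p | n) -> ~ periodicZ X p) ->
  2 <= n -> 3 * n <= 4 * e + 7 -> 0 <= e -> e + 1 <= f -> f <= n - 1 ->
  1 <= d -> 2 * d <= n -> 1 <= g -> 2 * g <= n -> 0 <= b <= n - 1 -> False.
Proof.
  intros HX HI HJ PU PV Ha Hn He He0 Hf Hf2 Hd Hd2 Hg Hg2 Hb.
  destruct (Z.eq_dec d g) as [Edg|Ndg].
  -
    subst g.
    destruct (Z_le_gt_dec b e) as [C|C].
    + (* q = e - n is an I-nonmatch inside J copy -1 *)
      apply (rn2 X U n d 0 (e + d) (-1) (e - n) (e - n + d) HX HI); try lia.
      apply (rm X V n d b (b + f + d) (-1)); auto; lia.
    + apply (rn1 X U n d 0 (e + d) 0 (-1) (-1 + d) HX HI); try lia.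
      apply (rm X V n d b (b + f + d) (-1)); auto; lia.
  - destruct (Z_le_gt_dec b (e - g + 1)) as [A1|A1].
    { apply (fw_rule X U V n d g 0 (e + d) b (b + f + g) (-1) (-1) (b - n)
               (Z.min (-n + e + d) (b - n + f + g))); auto; lia. }
    destruct (Z_le_gt_dec (n + d) (b + f + 1)) as [A2|A2].
    { apply (fw_rule X U V n d g 0 (e + d) b (b + f + g) 0 (-1) 0
               (Z.min (e + d) (b - n + f + g))); auto; lia. }
    destruct (Z_lt_le_dec d g) as [Ldg|Ldg].
    + destruct (Z_le_gt_dec (d + 1) b) as [A3|A3].
      *
        apply (per_rule2 X (e - n) g d).
        -- apply (rm X V n g b (b + f + g) (-1)); auto; lia.
        -- apply (rm X V n g b (b + f + g) (-1)); auto; lia.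
        -- apply (rm X U n d 0 (e + d) 0); auto; lia.
        -- apply (rn2 X U n d 0 (e + d) (-1)); auto; lia.
      *
        apply (per_rule X (-1 - g) g d).
        -- apply (rm X V n g b (b + f + g) (-1)); auto; lia.
        -- apply (rm X V n g b (b + f + g) (-1)); auto; lia.
        -- apply (rm X U n d 0 (e + d) (-1)); auto; lia.
        -- apply (rn1 X U n d 0 (e + d) 0); auto; lia.
    + destruct (Z_le_gt_dec (d + 1) b) as [A3|A3].
      *
        apply (per_rule X (b - 1 - d) d g).
        -- apply (rm X U n d 0 (e + d) 0); auto; lia.
        -- apply (rm X U n d 0 (e + d) 0); auto; lia.
        -- apply (rm X V n g b (b + f + g) (-1)); auto; lia.
        -- apply (rn1 X V n g b (b + f + g) 0); auto; lia.
      * destruct (Z_le_gt_dec 0 (n + e - f - g - b - 1)) as [A4|A4].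
        --
           apply (per_rule2 X (b + f - n) d g).
           ++ apply (rm X U n d 0 (e + d) 0); auto; lia.
           ++ apply (rm X U n d 0 (e + d) 0); auto; lia.
           ++ apply (rm X V n g b (b + f + g) 0); auto; lia.
           ++ apply (rn2 X V n g b (b + f + g) (-1)); auto; lia.
        -- destruct (Z_le_gt_dec n (e + g)) as [A5|A5].
           ++ apply (per_rule X (-1 - g) g d).
              ** apply (rm X V n g b (b + f + g) (-1)); auto; lia.
              ** apply (rm X V n g b (b + f + g) (-1)); auto; lia.
              ** apply (rm X U n d 0 (e + d) (-1)); auto; lia.
              ** apply (rn1 X U n d 0 (e + d) 0); auto; lia.
           ++ destruct (Z_le_gt_dec n (2 * d)) as [A6|A6].
              ** apply (exI X U n d e); auto; lia.
              ** destruct (Z_le_gt_dec 6 d) as [A7|A7].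
                 ---
                     assert (E1 : n = 2 * d + 1) by lia.
                     assert (E2 : 2 * g = d + 2) by lia.
                     assert (E3 : 2 * e = 3 * d - 2) by lia.
                     assert (E4 : f = n - 2) by lia.
                     assert (E5 : b = d) by lia.
                     set (m := g - 1).
                     assert (Em : d = 2 * m) by lia.
                     apply (rn2 X U n d 0 (e + d) 0 (3 * m - 1) (5 * m - 1) HX HI); try lia.
                     transitivity (X (m - 1)).
                     { symmetry. apply (rm X U n d 0 (e + d) 0); auto; lia. }
                     transitivity (X (5 * m)). { apply (rp X n); auto; lia. }
                     transitivity (X (4 * m - 1)).
                     { symmetry. apply (rm X V n g b (b + f + g) 0); auto; lia. }
                     transitivity (X (3 * m - 2)).
                     { symmetry. apply (rm X V n g b (b + f + g) 0); auto; lia. }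
                     transitivity (X (5 * m - 2)).
                     { apply (rm X U n d 0 (e + d) 0); auto; lia. }
                     transitivity (X (m - 3)). { symmetry; apply (rp X n); auto; lia. }
                     transitivity (X (3 * m - 3)).
                     { apply (rm X U n d 0 (e + d) 0); auto; lia. }
                     transitivity (X (4 * m - 2)).
                     { apply (rm X V n g b (b + f + g) 0); auto; lia. }
                     apply (rm X V n g b (b + f + g) 0); auto; lia.
                 ---
                     assert (n = 9 /\ e = 5 /\ f = 7 /\ d = 4 /\ g = 3 /\ b = 4) as
                         (-> & -> & -> & -> & -> & ->) by lia.
                     apply (rn2 X U 9 4 0 (5 + 4) 0 5 9 HX HI); try lia.
                     transitivity (X 1). { symmetry. apply (rm X U 9 4 0 (5 + 4) 0); auto; lia. }
                     transitivity (X 10). { apply (rp X 9); auto; lia. }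
                     transitivity (X 7). { symmetry. apply (rm X V 9 3 4 (4 + 7 + 3) 0); auto; lia. }
                     transitivity (X 4). { symmetry. apply (rm X V 9 3 4 (4 + 7 + 3) 0); auto; lia. }
                     transitivity (X 0). { symmetry. apply (rm X U 9 4 0 (5 + 4) 0); auto; lia. }
                     apply (rp X 9); auto; lia.
Qed.


Lemma run_shift X X' U d lo hi s : run X U d lo hi -> (forall i, X' i = X (i + s)) ->
  run X' (fun j => U (j + s)) d (lo - s) (hi - s).
Proof.
  intros [HU [HXU [H1 H2]]] HX'. repeat split.
  - intros j. simpl. replace (j + d + s) with ((j + s) + d) by lia. apply HU.
  - intros i Hi. erewrite HX'. apply HXU. lia.
  - erewrite HX'. replace (lo - s - 1 + s) with (lo - 1) by lia. exact H1.
  - erewrite HX'. replace (hi - s + s) with hi by lia. exact H2.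
Qed.

Lemma run_copy X U n d lo hi M : periodicZ X n -> run X U d lo hi ->
  run X (fun j => U (j + - (M * n))) d (lo + M * n) (hi + M * n).
Proof.
  intros HX Hr.
  assert (E : forall i, X i = X (i + - (M * n))).
  { intros i. erewrite <- (periodicZ_mul X n HX M (i + - (M * n))). f_equal; lia. }
  pose proof (run_shift X X U d lo hi (- (M * n)) Hr E) as R.
  replace (lo - - (M * n)) with (lo + M * n) in R by lia.
  replace (hi - - (M * n)) with (hi + M * n) in R by lia.
  exact R.
Qed.

Lemma primZ_shift U d s : primZ U d -> primZ (fun j => U (j + s)) d.
Proof.
  intros P p Hp Hd HU. apply (P p Hp Hd). intros j.
  specialize (HU (j - s)). simpl in HU. replace (j - s + p + s) with (j + p) in HU by lia.
  replace (j - s + s) with j in HU by lia. exact HU.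
Qed.

Lemma primZ_ext U U' d s : primZ U d -> (forall j, U' j = U (j + s)) -> primZ U' d.
Proof.
  intros P E p Hp Hd HU. apply (P p Hp Hd). intros j.
  specialize (HU (j - s)). erewrite !E in HU. replace (j - s + p + s) with (j + p) in HU by lia.
  replace (j - s + s) with j in HU by lia. exact HU.
Qed.

Lemma run_short X U n d lo hi : periodicZ X n -> run X U d lo hi -> 1 <= d -> 0 < n ->
  hi - lo < n + d.
Proof.
  intros HX [HU [HXU [H1 H2]]] Hd Hn. destruct (Z_lt_le_dec (hi - lo) (n + d)) as [C|C]; auto.
  exfalso. apply H2.
  transitivity (X (hi - n)). { symmetry; apply (rp X n); auto; lia. }
  erewrite (HXU (hi - n)) by lia.
  transitivity (U (hi - n - d)). { erewrite <- (HU (hi - n - d)). f_equal; lia. }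
  erewrite <- (HXU (hi - n - d)) by lia.
  transitivity (X (hi - d)). { apply (rp X n); auto; lia. }
  erewrite (HXU (hi - d)) by lia. erewrite <- (HU (hi - d)). f_equal; lia.
Qed.

Definition aperZ (X : Z -> bool) n := forall p, 0 < p < n -> (p | n) -> ~ periodicZ X p.

Lemma core n X U V d g lo hi lo' hi' :
  periodicZ X n -> run X U d lo hi -> run X V g lo' hi' -> primZ U d -> primZ V g -> aperZ X n ->
  2 <= n -> 1 <= d -> 2 * d <= n -> 1 <= g -> 2 * g <= n ->
  3 * n <= 4 * (hi - lo - d) + 7 -> hi - lo - d + 1 <= hi' - lo' - g -> False.
Proof.
  intros HX HI HJ PU PV Ha Hn Hd Hd2 Hg Hg2 He Hf.
  pose proof (run_short X U n d lo hi HX HI ltac:(lia) ltac:(lia)) as S1.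
  pose proof (run_short X V n g lo' hi' HX HJ ltac:(lia) ltac:(lia)) as S2.
  set (X' := fun i => X (i + lo)).
  assert (HX'e : forall i, X' i = X (i + lo)) by reflexivity.
  assert (HX' : periodicZ X' n).
  { intros j. unfold X'. replace (j + n + lo) with ((j + lo) + n) by lia. apply HX. }
  pose proof (run_shift X X' U d lo hi lo HI HX'e) as HI'.
  pose proof (run_shift X X' V g lo' hi' lo HJ HX'e) as HJ'.
  set (delta := lo' - lo).
  set (bb := delta mod n). set (M := delta / n).
  assert (Hbb : 0 <= bb < n) by (apply Z.mod_pos_bound; lia).
  assert (Hdel : delta = M * n + bb) by (unfold bb, M; pose proof (Z.div_mod delta n); lia).
  pose proof (run_copy X' _ n g (lo' - lo) (hi' - lo) (- M) HX' HJ') as HJ''.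
  replace (lo - lo) with 0 in HI' by lia. replace (hi - lo) with ((hi - lo - d) + d) in HI' by lia.
  replace (lo' - lo + - M * n) with bb in HJ'' by lia.
  replace (hi' - lo + - M * n) with (bb + (hi' - lo' - g) + g) in HJ'' by lia.
  apply (core0 n (hi - lo - d) (hi' - lo' - g) d g bb X' _ _ HX' HI' HJ''); try lia.
  - apply primZ_shift; auto.
  - apply (primZ_ext V _ g (- (- M * n) + lo) PV). intros j. f_equal; lia.
  - intros p Hp Hpn HP. apply (Ha p Hp Hpn). intros j.
    specialize (HP (j - lo)). unfold X' in HP. replace (j - lo + p + lo) with (j + p) in HP by lia.
    replace (j - lo + lo) with j in HP by lia. exact HP.
Qed.

Close Scope Z_scope.

Set Implicit Arguments. Unset Strict Implicit. Unset Printing Implicit Defensive.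

Definition Xs (s : seq bool) (i : Z) : bool :=
  nth false s (Z.to_nat (i mod Z.of_nat (size s))).
Definition Us (s : seq bool) (d : nat) (j : Z) : bool :=
  nth false s (Z.to_nat (j mod Z.of_nat d)).

Lemma Z_of_nat_modn a b : 0 < b -> Z.of_nat (a %% b) = (Z.of_nat a mod Z.of_nat b)%Z.
Proof.
  move=> Hb. have E := divn_eq a b. have L := ltn_pmod a Hb.
  move: (a %/ b) (a %% b) E L => q r E L. apply: (@Z.mod_unique _ _ (Z.of_nat q)).
  - left. lia.
  - rewrite {1}E Nat2Z.inj_add Nat2Z.inj_mul. lia.
Qed.

Lemma Xs_nat s i : i < size s -> Xs s (Z.of_nat i) = nth false s i.
Proof.
  move=> Hi. rewrite /Xs Z.mod_small; last by lia. by rewrite Nat2Z.id.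
Qed.

Lemma Us_mod s d i : 0 < d -> Us s d (Z.of_nat i) = nth false s (i %% d).
Proof. move=> Hd. by rewrite /Us -Z_of_nat_modn // Nat2Z.id. Qed.

Lemma Xs_per s : periodicZ (Xs s) (Z.of_nat (size s)).
Proof.
  move=> j. rewrite /Xs. congr (nth _ _ (Z.to_nat _)).
  have -> : (j + Z.of_nat (size s) = j + 1 * Z.of_nat (size s))%Z by lia.
  by rewrite Z_mod_plus_full.
Qed.

Lemma Us_per s d : periodicZ (Us s d) (Z.of_nat d).
Proof.
  move=> j. rewrite /Us. congr (nth _ _ (Z.to_nat _)).
  have -> : (j + Z.of_nat d = j + 1 * Z.of_nat d)%Z by lia.
  by rewrite Z_mod_plus_full.
Qed.

Lemma mod_neg (m j : nat) : j < m -> ((-1 - Z.of_nat j) mod Z.of_nat m = Z.of_nat (m.-1 - j))%Z.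
Proof.
  move=> Hj.
  have -> : (-1 - Z.of_nat j = Z.of_nat (m.-1 - j) + (-1) * Z.of_nat m)%Z by lia.
  rewrite Z_mod_plus_full Z.mod_small //; lia.
Qed.

Lemma mod_neg_d (d j : nat) : 0 < d ->
  ((-1 - Z.of_nat j) mod Z.of_nat d = Z.of_nat (d.-1 - j %% d))%Z.
Proof.
  move=> Hd. have E := divn_eq j d. have L := ltn_pmod j Hd.
  move: (j %/ d) (j %% d) E L => q r E L.
  symmetry. apply: (@Z.mod_unique _ _ (- Z.of_nat q - 1)%Z).
  - left. lia.
  - rewrite {1}E Nat2Z.inj_add Nat2Z.inj_mul. lia.
Qed.


Lemma nth_flat_nseq (T : Type) (x0 : T) m (w : seq T) i : i < m * size w ->
  nth x0 (flatten (nseq m w)) i = nth x0 w (i %% size w).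
Proof.
  elim: m i => [|m IH] i Hi; first by rewrite mul0n in Hi.
  rewrite /= nth_cat. case: ifP => Hlt.
  - by rewrite modn_small.
  - rewrite IH; last by rewrite mulSn in Hi; lia.
    congr nth. have Hle : size w <= i by lia.
    by rewrite -{2}(subnK Hle) modnDr.
Qed.

Lemma per_flat (w : seq bool) p : 0 < p -> 0 < size w -> p %| size w ->
  (forall i, i < size w -> nth false w i = nth false w (i %% p)) ->
  w = flatten (nseq (size w %/ p) (take p w)).
Proof.
  move=> Hp Hw Hdv H.
  have Hpl : p <= size w by apply: dvdn_leq.
  have Hst : size (take p w) = p by rewrite size_take; case: ltnP => //; lia.
  apply: (@eq_from_nth _ false).
  - rewrite size_flatten /shape map_nseq sumn_nseq Hst mulnC. by rewrite divnK.
  - move=> i Hi. rewrite nth_flat_nseq; last by rewrite Hst divnK.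

    rewrite Hst nth_take; last by rewrite ltn_mod.
    by rewrite H.
Qed.

Lemma head_nth n c d s : inB n c d s -> forall i, i < c + d - 1 -> nth false s i = nth false s (i %% d).
Proof.
  move=> [[Hsz Hc Hd Hdn] [Hap Hapd Htk]] i Hi.
  have Hdn' : d <= n by move: Hdn; rewrite leq_min => /andP[_ ?]; lia.
  have Hcd : c + d <= n by move: Hdn; rewrite leq_min => /andP[? _]; lia.
  have Hu : size (take d s) = d by rewrite size_take Hsz; case: ltnP => //; lia.
  have E := divn_eq (c + d - 1) d.
  have L := ltn_pmod (c + d - 1) Hd.
  rewrite -(@nth_take (c + d)); last by lia.
  rewrite Htk nth_cat size_flatten /shape map_nseq sumn_nseq Hu.
  move: Htk E L. set q := (c + d - 1) %/ d. set r := (c + d - 1) %% d. move=> Htk E L.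
  case: ifP => Hlt.
  - rewrite nth_flat_nseq; last by rewrite Hu; lia.
    by rewrite Hu nth_take // ltn_mod.
  - rewrite nth_cat size_take Hsz.
    have Hrn : r < n by lia.
    rewrite Hrn. have Hir : i - d * q < r by lia.
    rewrite Hir nth_take //.
    congr nth.
    have -> : i = q * d + (i - d * q) by lia.
    by rewrite modnMDl modn_small; lia.
Qed.

Lemma add_le d s : add d s <= size s.
Proof. by rewrite /add -{3}(size_iota 0 (size s)) find_size. Qed.

Lemma tail_nth d s j : j < add d s ->
  nth false s ((size s).-1 - j) = nth false s (d.-1 - j %% d).
Proof.
  move=> Hj. have Hjn : j < size s by have := add_le d s; lia.
  have := before_find 0 Hj. rewrite nth_iota // add0n.
  by move/negbFE/eqP.
Qed.

Lemma tail_nm d s : add d s < size s ->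
  nth false s ((size s).-1 - add d s) != nth false s (d.-1 - add d s %% d).
Proof.
  move=> Ht. rewrite /add in Ht *.
  have Hh : has (fun i => nth false s ((size s).-1 - i) != nth false s (d.-1 - i %% d))
              (iota 0 (size s)) by rewrite has_find size_iota.
  have := nth_find 0 Hh. rewrite nth_iota ?add0n //.
Qed.

Lemma head_break n c d s : inB n c d s ->
  nth false s (c + d - 1) = ~~ nth false s ((c + d - 1) %% d).
Proof.
  move=> [[Hsz Hc Hd Hdn] [Hap Hapd Htk]].
  have Hdn' : d <= n by move: Hdn; rewrite leq_min => /andP[_ ?]; lia.
  have Hcd : c + d <= n by move: Hdn; rewrite leq_min => /andP[? _]; lia.
  have Hu : size (take d s) = d by rewrite size_take Hsz; case: ltnP => //; lia.
  have E := divn_eq (c + d - 1) d.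
  have L := ltn_pmod (c + d - 1) Hd.
  rewrite -(@nth_take (c + d)); last by lia.
  rewrite Htk nth_cat size_flatten /shape map_nseq sumn_nseq Hu.
  move: Htk E L. set q := (c + d - 1) %/ d. set r := (c + d - 1) %% d. move=> Htk E L.
  have -> : (c + d - 1 < d * q) = false by lia.
  rewrite nth_cat size_take Hsz.
  have Hrn : r < n by lia.
  rewrite Hrn. have -> : (c + d - 1 - d * q < r) = false by lia.
  have -> : c + d - 1 - d * q - r = 0 by lia.
  by [].
Qed.


Lemma short_aux X U n d lo hi : periodicZ X n -> periodicZ U d ->
  (forall i, (lo <= i < hi)%Z -> X i = U i) -> X hi <> U hi -> (1 <= d)%Z -> (0 < n)%Z ->
  (hi - lo < n + d)%Z.
Proof.
  move=> HX HU HXU H2 Hd Hn. case: (Z_lt_le_dec (hi - lo) (n + d)) => C //.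
  exfalso. apply H2.
  transitivity (X (hi - n)%Z). { symmetry; apply (rp X n); auto; lia. }
  rewrite (HXU (hi - n)%Z); last by lia.
  transitivity (U (hi - n - d)%Z). { rewrite -(HU (hi - n - d)%Z). f_equal; lia. }
  rewrite -(HXU (hi - n - d)%Z); last by lia.
  transitivity (X (hi - d)%Z). { apply (rp X n); auto; lia. }
  rewrite (HXU (hi - d)%Z); last by lia.
  rewrite -(HU (hi - d)%Z). f_equal; lia.
Qed.

Lemma XU_neg n c d s (j : nat) : inB n c d s -> j < add d s ->
  Xs s (-1 - Z.of_nat j)%Z = Us s d (-1 - Z.of_nat j)%Z.
Proof.
  move=> HB Hj. have [[Hsz Hc Hd Hdn] _] := HB.
  have Hjn : j < size s by have := add_le d s; lia.
  rewrite /Xs /Us mod_neg // mod_neg_d // !Nat2Z.id.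
  exact: tail_nth.
Qed.

Lemma XU_nm n c d s : inB n c d s -> add d s < n ->
  Xs s (-1 - Z.of_nat (add d s))%Z <> Us s d (-1 - Z.of_nat (add d s))%Z.
Proof.
  move=> HB Hj. have [[Hsz Hc Hd Hdn] _] := HB.
  rewrite /Xs /Us mod_neg; last by lia.
  rewrite mod_neg_d // !Nat2Z.id. apply/eqP. rewrite -Hsz in Hj. exact: tail_nm.
Qed.

Lemma run_s n c d s : inB n c d s ->
  run (Xs s) (Us s d) (Z.of_nat d) (- Z.of_nat (add d s)) (Z.of_nat (c + d - 1)) /\
  add d s < n.
Proof.
  move=> HB. have [[Hsz Hc Hd Hdn] _] := HB.
  have Hdn' : d <= n by move: Hdn; rewrite leq_min => /andP[_ ?]; lia.
  have Hcd : c + d <= n by move: Hdn; rewrite leq_min => /andP[? _]; lia.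
  have HXU : forall i, (- Z.of_nat (add d s) <= i < Z.of_nat (c + d - 1))%Z -> Xs s i = Us s d i.
  { move=> i Hi. case: (Z_le_gt_dec 0 i) => C.
    - have -> : i = Z.of_nat (Z.to_nat i) by lia.
      rewrite Xs_nat; last by lia.
      rewrite Us_mod //. apply: (head_nth HB). lia.
    - have -> : i = (-1 - Z.of_nat (Z.to_nat (-1 - i)))%Z by lia.
      apply: (XU_neg HB). lia. }
  have Hhi : Xs s (Z.of_nat (c + d - 1)) <> Us s d (Z.of_nat (c + d - 1)).
  { rewrite Xs_nat; last by lia. rewrite Us_mod // (head_break HB).
    by case: (nth false s _). }
  have Ht : add d s < n.
  { have := short_aux (Xs_per s) (Us_per s d) HXU Hhi ltac:(lia) ltac:(lia). lia. }
  refine (conj (conj (Us_per s d) (conj HXU (conj _ Hhi))) Ht).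
  have -> : (- Z.of_nat (add d s) - 1 = -1 - Z.of_nat (add d s))%Z by lia.
  exact: (XU_nm HB Ht).
Qed.


Lemma per_to_flat (w : seq bool) (P : Z -> bool) (p : Z) :
  (0 < p)%Z -> (Z.to_nat p < size w) ->
  (p | Z.of_nat (size w))%Z -> periodicZ P p ->
  (forall i, i < size w -> nth false w i = P (Z.of_nat i)) ->
  periodic w.
Proof.
  move=> Hp Hpw [k Hk] HP Hw. set p' := Z.to_nat p.
  have Ep : p = Z.of_nat p' by rewrite /p'; lia.
  have Hp' : 0 < p' by lia.
  exists p'. split => //.
  - apply/dvdnP. exists (Z.to_nat k). apply: Nat2Z.inj.
    rewrite Nat2Z.inj_mul Z2Nat.id; last by nia.
    rewrite -Ep. lia.
  - apply: per_flat => //; first by lia.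
    + apply/dvdnP. exists (Z.to_nat k). apply: Nat2Z.inj.
      rewrite Nat2Z.inj_mul Z2Nat.id; last by nia.
      rewrite -Ep. lia.
    + move=> i Hi. rewrite Hw // Hw; last by have := ltn_pmod i Hp'; lia.
      rewrite Z_of_nat_modn // -Ep.
      rewrite -(periodicZ_mul P p HP (Z.of_nat i / p) (Z.of_nat i mod p)).
      f_equal. have := Z.div_mod (Z.of_nat i) p. lia.
Qed.

Lemma prim_s n c d s : inB n c d s -> primZ (Us s d) (Z.of_nat d).
Proof.
  move=> HB. have [[Hsz Hc Hd Hdn] [Hap Hapd Htk]] := HB.
  have Hdn' : d <= n by move: Hdn; rewrite leq_min => /andP[_ ?]; lia.
  have Hu : size (take d s) = d by rewrite size_take Hsz; case: ltnP => //; lia.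
  move=> p Hp Hpd HP. apply: Hapd.
  apply: (@per_to_flat (take d s) (Us s d) p) => //.
  - lia.
  - rewrite Hu. lia.
  - by rewrite Hu.
  - move=> i Hi. rewrite Hu in Hi. rewrite nth_take // Us_mod // modn_small //.
Qed.

Lemma aper_s n c d s : inB n c d s -> aperZ (Xs s) (Z.of_nat n).
Proof.
  move=> HB. have [[Hsz Hc Hd Hdn] [Hap Hapd Htk]] := HB.
  move=> p Hp Hpd HP. apply: Hap.
  apply: (@per_to_flat s (Xs s) p) => //.
  - lia.
  - rewrite Hsz. lia.
  - by rewrite Hsz.
  - move=> i Hi. by rewrite Xs_nat.
Qed.

Lemma nth_rotr (k : nat) (s : seq bool) j : k < size s -> j < size s ->
  nth false (rotr k s) j = nth false s ((j + (size s - k)) %% size s).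
Proof.
  move=> Hk Hj. rewrite /rotr /rot nth_cat size_drop.
  case: ifP => C.
  - rewrite nth_drop modn_small; last by lia. congr nth. lia.
  - rewrite nth_take; last by lia.
    have -> : j + (size s - k) = size s + (j - (size s - (size s - k))) by lia.
    rewrite modnDl modn_small //; lia.
Qed.

Lemma Xs_rotr (k : nat) (s : seq bool) i : k < size s ->
  Xs (rotr k s) i = Xs s (i - Z.of_nat k)%Z.
Proof.
  move=> Hk. rewrite /Xs size_rotr.
  have Hn : (0 < Z.of_nat (size s))%Z by lia.
  have Hr := Z.mod_pos_bound i (Z.of_nat (size s)) Hn.
  rewrite nth_rotr //; last by lia.
  congr nth. apply: Nat2Z.inj. rewrite Z_of_nat_modn; last by lia.
  rewrite Z2Nat.id; last by apply Z.mod_pos_bound.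
  rewrite Nat2Z.inj_add Z2Nat.id; last by lia.
  rewrite Nat2Z.inj_sub; last by lia.
  rewrite Z.add_mod_idemp_l; last by lia.
  have -> : (i + (Z.of_nat (size s) - Z.of_nat k) = (i - Z.of_nat k) + 1 * Z.of_nat (size s))%Z by lia.
  by rewrite Z_mod_plus_full.
Qed.


Theorem lemma8 (n w : nat) (s : seq bool) (d : nat) :
  0 < n -> 0 < w -> (3 * n) %/ 4 <= w ->
  inB n (uphalf n) d s ->
  add d s = w - uphalf n ->
  forall (k d' : nat), k < n -> inB n (uphalf n) d' (Rshift k s) ->
    add d' (Rshift k s) <= add d s.
Proof.
  move=> Hn Hw H34 HB Hadd k d' Hk HB'.
  rewrite leqNgt; apply/negP => Hlt.
  have [[Hsz Hc Hd Hdn] _] := HB. have [[Hsz' _ Hd' Hdn'] _] := HB'.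
  have Hdn2 : d <= n./2 by move: Hdn; rewrite leq_min => /andP[_ ?].
  have Hdn2' : d' <= n./2 by move: Hdn'; rewrite leq_min => /andP[_ ?].
  have [HI Ht] := run_s HB. have [HJa Ht'] := run_s HB'.
  have Hks : k < size s by rewrite Hsz.
  have E : forall i, Xs s i = Xs (Rshift k s) (i + Z.of_nat k)%Z.
  { move=> i. rewrite /Rshift Xs_rotr //. f_equal; lia. }
  have HJ := run_shift _ _ _ _ _ _ _ HJa E.
  have HX : periodicZ (Xs s) (Z.of_nat n) by rewrite -Hsz; apply: Xs_per.
  have PU := prim_s HB.
  have PV : primZ (fun j => Us (Rshift k s) d' (j + Z.of_nat k)) (Z.of_nat d').
  { apply: (primZ_ext _ _ _ _ (prim_s HB')). move=> j. reflexivity. }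
  have Ha := aper_s HB.
  move: Hlt Hadd H34 Hdn2 Hdn2'.
  move: (add d s) (add d' (Rshift k s)) HI HJ Ht Ht' => t t' HI HJ Ht Ht' Hlt Hadd H34 Hdn2 Hdn2'.
  apply: (core _ _ _ _ _ _ _ _ _ _ HX HI HJ PU PV Ha); lia.
Qed.
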